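(* Let $n\ge1$, $\epsilon\in[0,1/2]$, $m\in\{j/2^n:0\le j\le 2^n\}$, and let $\Phi:[0,1]\to\mathbb{R}$ be convex. Then there exists a monotone Boolean function $f:\{0,1\}^n\to\{0,1\}$ with $\mathbb{E} f=m$ such that $\mathbb{E}\Phi(T_\epsilon f)\ge\mathbb{E}\Phi(T_\epsilon g)$ for every Boolean function $g:\{0,1\}^n\to\{0,1\}$ with $\mathbb{E} g=m$.
   Context: $\{0,1\}^n$ carries the uniform measure and $\mathbb{E}$ is expectation under it. The noise operator is $T_\epsilon f(x)=\mathbb{E} f(x+Z)$, where $Z$ has independent Bernoulli($\epsilon$) coordinates and addition is mod 2. A function $f$ is monotone if $f(x)\le f(y)$ whenever $x_i\le y_i$ for all $i\in[n]$. *)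

(* Defs.v *)
From mathcomp Require Import all_boot all_order all_algebra.
Set Implicit Arguments. Unset Strict Implicit. Unset Printing Implicit Defensive.
Import Order.TTheory GRing.Theory Num.Theory.
Local Open Scope ring_scope.

Definition cube (n : nat) := {ffun 'I_n -> bool}.

Definition cadd n (x z : cube n) : cube n := [ffun i => x i (+) z i].

Definition Ecube (R : numFieldType) n (F : cube n -> R) : R :=
  (\sum_(x : cube n) F x) / (2 ^+ n)%:R.

Definition bern_weight (R : numFieldType) n (eps : R) (z : cube n) : R :=
  \prod_(i < n) (if z i then eps else 1 - eps).

Definition noise (R : numFieldType) n (eps : R) (f : cube n -> R) (x : cube n) : R :=
  \sum_(z : cube n) bern_weight eps z * f (cadd x z).

Definition bval (R : numFieldType) n (f : cube n -> bool) : cube n -> R :=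
  fun x => (f x)%:R.

Definition monotone_bool n (f : cube n -> bool) : Prop :=
  forall x y : cube n, (forall i, x i ==> y i) -> f x ==> f y.

Definition convex_on01 (R : realFieldType) (Phi : R -> R) : Prop :=
  forall x y t : R, 0 <= x <= 1 -> 0 <= y <= 1 -> 0 <= t <= 1 ->
    Phi (t * x + (1 - t) * y) <= t * Phi x + (1 - t) * Phi y.

(* Main.v *)
Require Import Defs.
From mathcomp Require Import all_boot all_order all_algebra.
From mathcomp Require Import lra zify.
Import Order.TTheory GRing.Theory Num.Theory.
Set Implicit Arguments. Unset Strict Implicit. Unset Printing Implicit Defensive.
Local Open Scope ring_scope.

Lemma exists_max (T : finType) (R : realDomainType) (P : pred T) (F : T -> R) x0 :
  P x0 -> exists2 x, P x & forall y, P y -> F y <= F x.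
Proof.
move=> Px0.
case: (@arg_maxP _ _ _ x0 P F Px0) => x Px Hx; exists x => //.
Qed.

Definition flip n (i : 'I_n) (x : cube n) : cube n :=
  [ffun k => if k == i then ~~ x k else x k].

Lemma flipK n (i : 'I_n) : involutive (flip i).
Proof.
by move=> x; apply/ffunP => k; rewrite !ffunE; case: eqP => // _; rewrite negbK.
Qed.

Lemma flip_i n (i : 'I_n) x : flip i x i = ~~ x i.
Proof. by rewrite ffunE eqxx. Qed.

Lemma flip_k n (i k : 'I_n) x : k != i -> flip i x k = x k.
Proof. by rewrite ffunE => /negPf ->. Qed.

Lemma cadd_flipl n (i : 'I_n) x z : cadd (flip i x) z = flip i (cadd x z).
Proof.
by apply/ffunP => k; rewrite !ffunE; case: eqP => // _; rewrite addNb.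
Qed.

Lemma cadd_flipr n (i : 'I_n) x z : cadd x (flip i z) = flip i (cadd x z).
Proof.
by apply/ffunP => k; rewrite !ffunE; case: eqP => // _; rewrite addbN.
Qed.

Lemma cadd_i n (i : 'I_n) x z : cadd x z i = x i (+) z i.
Proof. by rewrite ffunE. Qed.

Lemma pair_sum (R : numFieldType) n (i : 'I_n) (F : cube n -> R) :
  \sum_(x : cube n) F x = \sum_(x : cube n | ~~ x i) (F x + F (flip i x)).
Proof.
rewrite (bigID (fun x : cube n => ~~ x i)) /= big_split /=; congr (_ + _).
rewrite (reindex (flip i)) /=; last by exists (flip i) => y _; rewrite flipK.
by apply: eq_bigl => x; rewrite flip_i negbK.
Qed.

Lemma bern_sum (R : numFieldType) n (eps : R) :
  \sum_(z : cube n) bern_weight eps z = 1.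
Proof.
rewrite /bern_weight.
rewrite -(bigA_distr_bigA (fun (i : 'I_n) (b : bool) => if b then eps else 1 - eps)).
by rewrite big1 // => i _; rewrite big_bool /= addrC subrK.
Qed.

Lemma bern_ge0 (R : numFieldType) n (eps : R) (z : cube n) :
  0 <= eps <= 1 -> 0 <= bern_weight eps z.
Proof.
move=> /andP[e0 e1]; apply: prodr_ge0 => i _; case: (z i) => //.
by rewrite subr_ge0.
Qed.

Lemma noise01 (R : numFieldType) n (eps : R) (f : cube n -> bool) (x : cube n) :
  0 <= eps <= 1 -> 0 <= noise eps (bval R f) x <= 1.
Proof.
move=> He; apply/andP; split.
  by apply: sumr_ge0 => z _; apply: mulr_ge0; [exact: bern_ge0|rewrite /bval ler0n].
rewrite -(bern_sum n eps); apply: ler_sum => z _.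
rewrite -[X in _ <= X]mulr1; apply: ler_wpM2l; first exact: bern_ge0.
by rewrite /bval; case: (f _).
Qed.

Definition Wp (R : numFieldType) n (eps : R) (i : 'I_n) (z : cube n) : R :=
  \prod_(k < n | k != i) (if z k then eps else 1 - eps).

Definition aa (R : numFieldType) n (eps : R) (i : 'I_n) (f : cube n -> R) (x : cube n) : R :=
  \sum_(z : cube n | ~~ z i) Wp eps i z * f (cadd x z).

Lemma bern_split (R : numFieldType) n (eps : R) (i : 'I_n) (z : cube n) :
  bern_weight eps z = (if z i then eps else 1 - eps) * Wp eps i z.
Proof. by rewrite /bern_weight (bigD1 i). Qed.

Lemma Wp_flip (R : numFieldType) n (eps : R) (i : 'I_n) (z : cube n) :
  Wp eps i (flip i z) = Wp eps i z.
Proof. by apply: eq_bigr => k /flip_k ->. Qed.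

Lemma Wp_ge0 (R : numFieldType) n (eps : R) (i : 'I_n) (z : cube n) :
  0 <= eps <= 1 -> 0 <= Wp eps i z.
Proof.
move=> /andP[e0 e1]; apply: prodr_ge0 => k _; case: (z k) => //.
by rewrite subr_ge0.
Qed.

Lemma noise_dec (R : numFieldType) n (eps : R) (i : 'I_n) (f : cube n -> R) x :
  noise eps f x = (1 - eps) * aa eps i f x + eps * aa eps i f (flip i x).
Proof.
rewrite /noise (pair_sum i) /aa !mulr_sumr -big_split /=.
apply: eq_bigr => z /negPf zi.
rewrite !(bern_split _ i) flip_i zi /= Wp_flip cadd_flipr -cadd_flipl.
by rewrite !mulrA.
Qed.

Definition compr n (i : 'I_n) (f : cube n -> bool) (x : cube n) : bool :=
  if x i then f x || f (flip i x) else f x && f (flip i x).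

Lemma compr_mean (R : numFieldType) n (i : 'I_n) (f : cube n -> bool) :
  \sum_(x : cube n) bval R (compr i f) x = \sum_(x : cube n) bval R f x.
Proof.
rewrite !(pair_sum i); apply: eq_bigr => x /negPf xi.
rewrite /bval /compr flip_i xi /= flipK.
by case: (f x); case: (f (flip i x)); rewrite /= ?addr0 ?add0r.
Qed.

Lemma convex_pair (R : realFieldType) (Phi : R -> R) p q p' q' :
  convex_on01 Phi -> 0 <= p' <= 1 -> 0 <= q' <= 1 -> p' <= p <= q' ->
  p + q = p' + q' -> Phi p + Phi q <= Phi p' + Phi q'.
Proof.
move=> Hc Hp' Hq' /andP[h1 h2] hs.
have [e|ne] := eqVneq p' q'.
  have ep : p = p' by lra.
  have eq : q = q' by lra.
  by rewrite ep eq.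
have hd : 0 < q' - p' by lra.
set t := (q' - p) / (q' - p').
have t0 : 0 <= t by apply: divr_ge0; lra.
have t1 : t <= 1 by rewrite ler_pdivrMr // mul1r; lra.
have t01 : 0 <= t <= 1 by rewrite t0 t1.
have ht : t * (q' - p') = q' - p by rewrite /t divfK // subr_eq0 eq_sym.
have ep : p = t * p' + (1 - t) * q'.
  by move: ht; rewrite mulrBr; lra.
have eq : q = t * q' + (1 - t) * p'.
  by move: ht; rewrite mulrBr; lra.
have H1 := Hc p' q' t Hp' Hq' t01.
have H2 := Hc q' p' t Hq' Hp' t01.
rewrite ep eq; apply: le_trans (lerD H1 H2) _.
lra.
Qed.

Lemma comp_lo n (i : 'I_n) (f : cube n -> bool) (x z : {ffun 'I_n -> bool}) :
  ~~ x i -> ~~ z i -> compr i f (cadd x z) = f (cadd x z) && f (flip i (cadd x z)).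
Proof. by move=> /negPf xi /negPf zi; rewrite /compr cadd_i xi zi. Qed.

Lemma comp_hi n (i : 'I_n) (f : cube n -> bool) (x z : {ffun 'I_n -> bool}) :
  ~~ x i -> ~~ z i -> compr i f (cadd (flip i x) z) = f (flip i (cadd x z)) || f (cadd x z).
Proof.
by move=> /negPf xi /negPf zi; rewrite /compr cadd_flipl flip_i cadd_i xi zi /= flipK.
Qed.

Lemma key_obj (R : realFieldType) n (eps : R) (Phi : R -> R) (i : 'I_n)
  (f : cube n -> bool) :
  convex_on01 Phi -> 0 <= eps <= 1 / 2 ->
  \sum_(x : cube n) Phi (noise eps (bval R f) x)
    <= \sum_(x : cube n) Phi (noise eps (bval R (compr i f)) x).
Proof.
move=> Hc He.
have He1 : 0 <= eps <= 1 by case/andP: He => h1 h2; apply/andP; split; lra.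
rewrite !(pair_sum i); apply: ler_sum => x xi.
have n1 := @noise01 R n eps (compr i f) x He1.
have n2 := @noise01 R n eps (compr i f) (flip i x) He1.
rewrite !(noise_dec eps i) !flipK in n1 n2 *.
have HS : aa eps i (bval R (compr i f)) x + aa eps i (bval R (compr i f)) (flip i x)
        = aa eps i (bval R f) x + aa eps i (bval R f) (flip i x).
  rewrite /aa -!big_split; apply: eq_bigr => z zi /=.
  rewrite /bval comp_hi // comp_lo // cadd_flipl /bval -!mulrDr; congr (_ * _).
  by case: (f (cadd x z)); case: (f (flip i (cadd x z))); rewrite /= ?addr0 ?add0r.
have HD1 : aa eps i (bval R f) (flip i x) - aa eps i (bval R f) x <=
   aa eps i (bval R (compr i f)) (flip i x) - aa eps i (bval R (compr i f)) x.
  rewrite /aa -!sumrB; apply: ler_sum => z zi.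
  rewrite /bval comp_hi // comp_lo // cadd_flipl -!mulrBr.
  apply: ler_wpM2l; first exact: Wp_ge0.
  by case: (f (cadd x z)); case: (f (flip i (cadd x z))); rewrite /=; lra.
have HD2 : aa eps i (bval R f) x - aa eps i (bval R f) (flip i x) <=
   aa eps i (bval R (compr i f)) (flip i x) - aa eps i (bval R (compr i f)) x.
  rewrite /aa -!sumrB; apply: ler_sum => z zi.
  rewrite /bval comp_hi // comp_lo // cadd_flipl -!mulrBr.
  apply: ler_wpM2l; first exact: Wp_ge0.
  by case: (f (cadd x z)); case: (f (flip i (cadd x z))); rewrite /=; lra.
move: HS HD1 HD2 n1 n2.
set A := aa eps i (bval R f) x; set B := aa eps i (bval R f) (flip i x).
set A' := aa eps i (bval R (compr i f)) x; set B' := aa eps i (bval R (compr i f)) (flip i x).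
move=> HS HD1 HD2 n1 n2.
have k1 : 0 <= (1 - 2 * eps) * ((B' - A') - (B - A)) by apply: mulr_ge0; lra.
have k2 : 0 <= (1 - 2 * eps) * ((B' - A') + (B - A)) by apply: mulr_ge0; lra.
have HSe : eps * (A' + B') = eps * (A + B) by rewrite HS.
apply: convex_pair => //.
- apply/andP; split; lra.
- lra.
Qed.

Definition rk (R : numFieldType) n (x : cube n) : R := \sum_(k < n) ((x k)%:R : R).

Lemma rk_flip (R : numFieldType) n (i : 'I_n) (x : {ffun 'I_n -> bool}) :
  ~~ x i -> rk R (flip i x) = rk R x + 1.
Proof.
move=> /negPf xi; rewrite /rk (bigD1 i) // [X in _ = X + _](bigD1 i) //= flip_i xi /=.
rewrite (eq_bigr (fun k => ((x k)%:R : R))); last by move=> k /flip_k ->.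
by rewrite add0r addrC.
Qed.

Definition Pot (R : numFieldType) n (f : cube n -> bool) : R :=
  \sum_(x : cube n) (f x)%:R * rk R x.

Lemma Pot_comp (R : realFieldType) n (i : 'I_n) (f : cube n -> bool) (x0 : {ffun 'I_n -> bool}) :
  ~~ x0 i -> f x0 -> ~~ f (flip i x0) -> Pot R f < Pot R (compr i f).
Proof.
move=> x0i fx0 nfx0.
rewrite /Pot !(pair_sum i) (bigD1 x0) //= [X in _ < X](bigD1 x0) //=.
have term : forall x : {ffun 'I_n -> bool}, ~~ x i ->
   ((f x)%:R * rk R x + (f (flip i x))%:R * rk R (flip i x) : R) <=
   (compr i f x)%:R * rk R x + (compr i f (flip i x))%:R * rk R (flip i x).
  move=> x xi; rewrite rk_flip // /compr flip_i (negPf xi) flipK /=.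
  by case: (f x); case: (f (flip i x)); rewrite /=; lra.
apply: ltr_leD; last first.
  by apply: ler_sum => x /andP[xi _]; exact: term.
rewrite rk_flip // /compr flip_i (negPf x0i) flipK /= fx0 (negPf nfx0) /=; lra.
Qed.

Definition nz n (x : cube n) : nat := \sum_(k < n) (~~ x k : nat).

Lemma nz_flip n (i : 'I_n) (x : {ffun 'I_n -> bool}) :
  ~~ x i -> nz x = (nz (flip i x)).+1.
Proof.
move=> xi; rewrite /nz (bigD1 i) //= [in RHS](bigD1 i) //= flip_i negbK (negPf xi) /= add0n add1n.
by congr (_.+1); apply: eq_bigr => k /flip_k ->.
Qed.

Lemma dir_mono n (f : cube n -> bool) :
  (forall (i : 'I_n) (x : {ffun 'I_n -> bool}), ~~ x i -> f x -> f (flip i x)) ->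
  monotone_bool f.
Proof.
move=> H x y.
suff: forall N (x : {ffun 'I_n -> bool}), (nz x < N)%N ->
   (forall i, x i ==> y i) -> f x ==> f y by apply; exact: ltnSn.
elim => [//|N IH] {}x hN hxy.
have [-> | ne] := eqVneq x y; first by rewrite implybb.
have : ~~ [forall k, x k == y k].
  apply: contra ne => /forallP h; apply/eqP/ffunP => k; exact/eqP/h.
rewrite negb_forall => /existsP [k hk].
have xk : ~~ x k by move: (hxy k) hk; case: (x k); case: (y k).
have yk : y k by move: (hxy k) hk; case: (x k); case: (y k).
apply/implyP => fx.
have := IH (flip k x); rewrite -(ltn_add2r 1) !addn1 -nz_flip // => /(_ hN).
move=> /(_ _)/implyP; apply; last exact: H.
move=> i; rewrite ffunE; case: eqP => [->|_]; first by rewrite yk implybT.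
exact: hxy.
Qed.

Lemma sum_lt (R : numFieldType) N j :
  \sum_(i < N) (((i < j)%N)%:R : R) = (minn N j)%:R.
Proof.
elim: N => [|N IH]; first by rewrite big_ord0 min0n.
rewrite big_ord_recr /= IH -natrD; congr (_%:R).
case: (ltnP N j) => h /=; lia.
Qed.

Lemma exists_mean (R : numFieldType) n j : (j <= 2 ^ n)%N ->
  \sum_(x : cube n) (((enum_rank x < j)%N)%:R : R) = j%:R.
Proof.
move=> hj.
rewrite (reindex (enum_val : 'I_#|cube n| -> cube n)) /=; last first.
  by exists enum_rank => y _; rewrite ?enum_valK ?enum_rankK.
under eq_bigr do rewrite enum_valK.
rewrite sum_lt card_ffun card_bool card_ord.
by rewrite (minn_idPr hj).
Qed.

Lemma noise_ext (R : numFieldType) n (eps : R) (f1 f2 : cube n -> bool) (x : cube n) :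
  f1 =1 f2 -> noise eps (bval R f1) x = noise eps (bval R f2) x.
Proof. by move=> h; apply: eq_bigr => z _; rewrite /bval h. Qed.

Unset Implicit Arguments.
Theorem theorem2 (R : realFieldType) (n : nat) (eps : R) (j : nat)
  (Phi : R -> R) :
  (1 <= n)%N -> 0 <= eps <= 1 / 2 -> (j <= 2 ^ n)%N -> convex_on01 Phi ->
  exists f : cube n -> bool,
    [/\ monotone_bool f,
        Ecube (bval R f) = j%:R / (2 ^+ n)%:R &
        forall g : cube n -> bool,
          Ecube (bval R g) = j%:R / (2 ^+ n)%:R ->
          Ecube (fun x => Phi (noise eps (bval R g) x))
            <= Ecube (fun x => Phi (noise eps (bval R f) x))].
Proof.
move=> hn He hj Hc.
set m := j%:R / (2 ^+ n)%:R.
pose obj (g : {ffun cube n -> bool}) := \sum_(x : cube n) Phi (noise eps (bval R g) x).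
pose P (g : {ffun cube n -> bool}) := Ecube (bval R g) == m.
pose h0 : {ffun cube n -> bool} := [ffun x => (enum_rank x < j)%N].
have P0 : P h0.
  rewrite /P /Ecube /m; apply/eqP; congr (_ / _); rewrite /bval /h0.
  under eq_bigr do rewrite ffunE.
  exact: exists_mean.
have [h1 P1 M1] := @exists_max _ _ P obj h0 P0.
pose P2 (g : {ffun cube n -> bool}) := P g && (obj h1 <= obj g).
have P21 : P2 h1 by rewrite /P2 P1 lexx.
have [h2 /andP[P2a P2b] M2] := @exists_max _ _ P2 (fun g => Pot R g) h1 P21.
exists (fun x => h2 x); split.
- apply: dir_mono => i x xi fx; apply/negPn/negP => nf.
  pose h3 : {ffun cube n -> bool} := [ffun y => compr i h2 y].
  have e3 : forall y, h3 y = compr i h2 y by move=> y; rewrite ffunE.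
  have P3 : P2 h3.
    apply/andP; split.
      rewrite /P /Ecube.
      have -> : \sum_(x : cube n) bval R h3 x = \sum_(x : cube n) bval R h2 x.
        rewrite -(compr_mean R i h2); apply: eq_bigr => y _; by rewrite /bval e3.
      exact: P2a.
    apply: le_trans P2b _.
    have -> : obj h3 = \sum_(x : cube n) Phi (noise eps (bval R (compr i h2)) x).
      by apply: eq_bigr => y _; rewrite (noise_ext _ _ e3).
    exact: key_obj.
  have := M2 _ P3.
  have -> : Pot R h3 = Pot R (compr i h2) by apply: eq_bigr => y _; rewrite e3.
  by rewrite leNgt (Pot_comp R xi fx nf).
- exact/eqP.
- move=> g Hg.
  pose g' : {ffun cube n -> bool} := [ffun x => g x].
  have eg : forall x, g' x = g x by move=> x; rewrite ffunE.
  have Pg : P g'.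
    rewrite /P -Hg /Ecube; apply/eqP; congr (_ / _).
    by apply: eq_bigr => y _; rewrite /bval eg.
  have := M1 _ Pg.
  have -> : obj g' = \sum_(x : cube n) Phi (noise eps (bval R g) x).
    by apply: eq_bigr => y _; rewrite (noise_ext _ _ eg).
  move=> Hle.
  rewrite /Ecube; apply: ler_wpM2r; first by rewrite invr_ge0 ler0n.
  exact: le_trans Hle P2b.
Qed.
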